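(* Let $d\ge2$ and consider the cubical cell structure on $\mathbb{R}^d$ given by $\mathbb{Z}^d$. For all $(d-1)$-cells $c,c'$, $$S_cS_{c'}=S_{c'}S_c\,(-1)^{\int\boldsymbol c\cup_{d-2}\boldsymbol c'+\boldsymbol c'\cup_{d-2}\boldsymbol c}$$ and $$U_cU_{c'}=U_{c'}U_c\,(-1)^{\int\boldsymbol c\cup_{d-2}\boldsymbol c'+\boldsymbol c'\cup_{d-2}\boldsymbol c},$$ where $S_c$ and $U_c$ are the operators defined in the context.
   Context: Cells: the $k$-cells are integer translates of faces of unit cubes of $\mathbb{Z}^d$. For a $k$-cell $c$ spanning directions $i_1<\dots<i_k$, its subcells are $c(w)$ for $w\in\{+,-,\bullet\}^k$: $w_r=\pm$ fixes $x_{i_r}$ at its max/min on $c$, and $w_r=\bullet$ leaves it free. A $\mathbb{Z}_2$-valued $p$-cochain is a function from $p$-cells to $\mathbb{Z}_2$, zero on other cells. $\boldsymbol c$ denotes the indicator cochain of the cell $c$. $\int\phi$ of a $d$-cochain $\phi$ is $\sum_{d\text{-cells}}\phi$ mod 2. Higher cup products: for a $p$-cochain $\alpha$, a $q$-cochain $\beta$, and a $k$-cell $c$ with $k=p+q-m$, $$(\alpha\cup_m\beta)(c)=\sum_{1\le l_1<\dots<l_m\le k}\sum_{(w,w')}\alpha(c(w))\beta(c(w')).$$ The inner sum runs over pairs with $w_{l_r}=w'_{l_r}=\bullet$. At every other position $s$, with $\ell(s)=\#\{r:l_r<s\}$ and $\sigma_s=(-1)^{\ell(s)}\in\{\pm\}$,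 one has $(w_s,w'_s)\in\{(\sigma_s,\bullet),(\bullet,-\sigma_s)\}$. Faces of the wrong dimension contribute zero. Fermions: each $d$-cell $C$ carries two Majorana operators $\gamma_C,\gamma'_C$. All of them are Hermitian, square to $1$ and pairwise anticommute. For a $(d-1)$-cell $c$ perpendicular to the $x_i$-direction, let ${}^\pm c$ be the $d$-cell adjacent to $c$ in the $\pm x_i$ direction. Set $(L(c),R(c))=({}^-c,{}^+c)$ if $i+d$ is odd, and $(L(c),R(c))=({}^+c,{}^-c)$ if $i+d$ is even. Define $S_c=i\gamma_{L(c)}\gamma'_{R(c)}$. Bosons: each $(d-1)$-cell $c$ carries a qubit with Pauli operators $X_c,Z_c$ (operators on distinct cells commute). Define $$U_c=X_c\prod_{c'}Z_{c'}^{\int\boldsymbol c'\cup_{d-2}\boldsymbol c},$$ with the product over all $(d-1)$-cells $c'$. *)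

(* Defs.v *)
From HB Require Import structures.
From mathcomp Require Import all_boot all_order all_algebra all_field.
From Stdlib Require Import ClassicalEpsilon.
Set Implicit Arguments.
Unset Strict Implicit.
Unset Printing Implicit Defensive.
Import Order.TTheory GRing.Theory Num.Theory.
Local Open Scope ring_scope.

(* A cell is (x, D): base point x in Z^d and set of spanned directions  *)
(* D (a subset of {0,..,d-1}); it is the set of points y with           *)
(* y_i in [x_i, x_i+1] for i in D and y_i = x_i for i not in D.         *)
(* Direction j : 'I_d corresponds to the paper's x_{j+1}.               *)
Definition point (d : nat) := {ffun 'I_d -> int}.
Definition cell (d : nat) := (point d * {set 'I_d})%type.

Definition is_kcell d (k : nat) (c : cell d) : bool := #|c.2| == k.

Definition dcell d (x : point d) : cell d := (x, [set: 'I_d]).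

(* Z_2-valued cochains: functions on cells (a p-cochain is zero off p-cells) *)
Definition cochain d := cell d -> bool.

Definition ind d (c : cell d) : cochain d := fun c' => c' == c.

(* Subcell c(w).  A word w in {+,-,.}^k is encoded as a function on
   directions: Some true = '+', Some false = '-', None = '.'
   (only its values on the directions of c matter). *)
Definition subcell d (c : cell d) (w : {ffun 'I_d -> option bool}) : cell d :=
  ([ffun i => c.1 i + (((i \in c.2) && (w i == Some true)) : nat)%:Z],
   [set i in c.2 | w i == None]).

(* sigma_s = (-1)^{#{r : l_r < s}} ; true encodes '+' *)
Definition sigma d (L : {set 'I_d}) (s : 'I_d) : bool :=
  ~~ odd #|[set j in L | (j < s)%N]|.

Definition valid_pair d (c : cell d) (L : {set 'I_d})
    (w w' : {ffun 'I_d -> option bool}) : bool :=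
  [forall i,
    if i \in c.2 then
      (if i \in L then (w i == None) && (w' i == None)
       else ((w i == Some (sigma L i)) && (w' i == None))
         || ((w i == None) && (w' i == Some (~~ sigma L i))))
    else (w i == None) && (w' i == None)].

Definition cup d (m : nat) (alpha beta : cochain d) : cochain d :=
  fun c =>
    \big[addb/false]_(L : {set 'I_d} | (L \subset c.2) && (#|L| == m))
      \big[addb/false]_(w : {ffun 'I_d -> option bool})
        \big[addb/false]_(w' : {ffun 'I_d -> option bool} | valid_pair c L w w')
          (alpha (subcell c w) && beta (subcell c w')).

Definition in_box d (N : nat) (x : point d) : bool := [forall i, (`|x i|%N <= N)%N].

Definition box_pts d (N : nat) : seq (point d) :=
  [seq [ffun i => (f i : nat)%:Z - N%:Z] | f : {ffun 'I_d -> 'I_(N + N).+1}].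

Definition box_cells d (N : nat) (k : nat) : seq (cell d) :=
  [seq (x, D) | x : point d <- box_pts d N, D : {set 'I_d} <- enum [set D : {set 'I_d} | #|D| == k]].

(* \int phi = sum over all d-cells of phi, mod 2 (for finitely supported phi;
   N is any box radius outside of which phi vanishes on d-cells). *)
Definition integral d (phi : cochain d) : bool :=
  let N := epsilon (inhabits 0%N)
             (fun N => forall x : point d, ~~ in_box N x -> phi (dcell x) = false) in
  \big[addb/false]_(C <- box_cells d N d) phi C.

Definition unit_vec d (j : 'I_d) : point d := [ffun i => ((i == j) : nat)%:Z].

Definition perp d (c : cell d) : option 'I_d := [pick j | j \notin c.2].

Definition plus_cell d (c : cell d) : cell d := dcell c.1.
Definition minus_cell d (c : cell d) (j : 'I_d) : cell d :=
  dcell [ffun i => c.1 i - unit_vec j i].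

(* (L(c), R(c)); paper index i = j+1 *)
Definition LR d (c : cell d) : cell d * cell d :=
  match perp c with
  | Some j => if odd (j.+1 + d) then (minus_cell c j, plus_cell c)
              else (plus_cell c, minus_cell c j)
  | None => (c, c)
  end.

Definition S_op d (R : algType algC) (gamma gamma' : cell d -> R) (c : cell d) : R :=
  'i *: (gamma (LR c).1 * gamma' (LR c).2).

(* U_c = X_c prod_{c'} Z_{c'}^{\int c' \cup_{d-2} c}; the product ranges over
   (d-1)-cells; all but finitely many factors are 1, and N is a box radius
   outside of which all factors are 1 (the Z's pairwise commute, so the
   order of the finite product is irrelevant). *)
Definition U_op d (B : nzRingType) (X Z : cell d -> B) (c : cell d) : B :=
  let e := fun c' => integral (cup d.-2 (ind c') (ind c)) in
  let N := epsilon (inhabits 0%N)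
             (fun N => forall c' : cell d, is_kcell d.-1 c' ->
                         ~~ in_box N c'.1 -> e c' = false) in
  X c * \prod_(c' <- box_cells d N d.-1) (if e c' then Z c' else 1).

(* Main.v *)
Require Import Defs.
From HB Require Import structures.
From mathcomp Require Import all_boot all_order all_algebra all_field.
From mathcomp Require Import zify.
From Stdlib Require Import ClassicalEpsilon.
Set Implicit Arguments.
Unset Strict Implicit.
Unset Printing Implicit Defensive.
Import GRing.Theory Num.Theory.
Local Open Scope ring_scope.

Section Integral.
Variable d : nat.

Lemma big_addb1 (I : finType) (P : pred I) (F : I -> bool) (i0 : I) :
  (forall i, P i -> i != i0 -> F i = false) ->
  \big[addb/false]_(i | P i) F i = P i0 && F i0.
Proof.
move=> H; case Pi0: (P i0).
  rewrite (bigD1 i0) //= big1 ?addbF // => i /andP[Pi ne]; exact: H.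
rewrite big1 // => i Pi; apply: H => //; apply: contraTneq Pi => ->; by rewrite Pi0.
Qed.

Lemma big_addb_seq (T : eqType) (s1 s2 : seq T) (p : T -> bool) :
  uniq s1 -> uniq s2 -> (forall x, p x -> x \in s1) -> (forall x, p x -> x \in s2) ->
  \big[addb/false]_(x <- s1) p x = \big[addb/false]_(x <- s2) p x.
Proof.
move=> u1 u2 h1 h2.
have E s : \big[addb/false]_(x <- s) p x = \big[addb/false]_(x <- filter p s) true.
  rewrite big_filter [RHS]big_mkcond; apply: eq_bigr => i _; by case: (p i).
rewrite !E; apply: perm_big; apply: uniq_perm; rewrite ?filter_uniq //.
move=> x; rewrite !mem_filter; apply/andP/andP => -[px _]; split => //; auto.
Qed.

Lemma box_pts_uniq N : uniq (box_pts d N).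
Proof.
rewrite map_inj_uniq ?enum_uniq // => f g /ffunP H; apply/ffunP => i.
have := H i; rewrite !ffunE => /addIr [] /val_inj //.
Qed.

Lemma in_box_mem N (x : point d) : in_box N x -> x \in box_pts d N.
Proof.
move=> /forallP hx; apply/mapP.
have lt i : (`|(x i + N%:Z)%R| < (N + N).+1)%N.
  have := hx i; lia.
exists [ffun i => Ordinal (lt i)]; first by rewrite mem_enum.
apply/ffunP => i; rewrite !ffunE /=.
have := hx i; lia.
Qed.

Lemma sum_box (phi : cochain d) N :
  \big[addb/false]_(C <- box_cells d N d) phi C =
  \big[addb/false]_(x <- box_pts d N) phi (dcell x).
Proof.
rewrite /box_cells big_allpairs; apply: eq_bigr => x _.
have -> : [set D : {set 'I_d} | #|D| == d] = [set setT].
  apply/setP => D; rewrite !inE; apply/idP/eqP => [/eqP h|->].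
    by apply/eqP; rewrite eqEcard subsetT h cardsE card_ord leqnn.
  by rewrite cardsE card_ord.
by rewrite enum_set1 big_seq1.
Qed.

Lemma integral_eq (phi : cochain d) (S : seq (point d)) :
  uniq S -> (forall x, phi (dcell x) -> x \in S) ->
  integral phi = \big[addb/false]_(x <- S) phi (dcell x).
Proof.
move=> uS hS; rewrite /integral.
set N := epsilon _ _.
have hN : forall x : point d, ~~ in_box N x -> phi (dcell x) = false.
  apply: (@epsilon_spec nat (inhabits 0%N) (fun N => forall x : point d, ~~ in_box N x -> phi (dcell x) = false)).
  exists (\max_(x <- S) \max_i `|x i|%N) => x hx; apply/negbTE; apply: contra hx => px.
  apply/forallP => i.
  have h1 := @leq_bigmax_seq _ S xpredT (fun y : point d => \max_i `|y i|%N) x (hS x px) (erefl true).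
  have h2 := @leq_bigmax _ (fun i => `|x i|%N) i.
  exact: leq_trans h2 h1.
rewrite sum_box; apply: big_addb_seq => //; first exact: box_pts_uniq.
move=> x px; apply: in_box_mem; apply: contraT => /hN; by rewrite px.
Qed.

Lemma integral_xor (f g : cochain d) (S1 S2 : seq (point d)) :
  (forall x, f (dcell x) -> x \in S1) -> (forall x, g (dcell x) -> x \in S2) ->
  integral (fun C => f C (+) g C) = integral f (+) integral g.
Proof.
move=> h1 h2; set S := undup (S1 ++ S2).
have uS : uniq S by apply: undup_uniq.
rewrite !(@integral_eq _ S) //.
- by rewrite (big_split (Monoid.ComLaw.clone _ _ addb _)).
- by move=> x /h2 hx; rewrite mem_undup mem_cat hx orbT.
- by move=> x /h1 hx; rewrite mem_undup mem_cat hx.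
- move=> x; case fx: (f (dcell x)) => /=.
    by move=> _; rewrite mem_undup mem_cat h1.
  by move=> /h2 hx; rewrite mem_undup mem_cat hx orbT.
Qed.
End Integral.
Section Geo.
Variable d : nat.

Definition shift (x : point d) (j : 'I_d) (b : bool) : point d :=
  [ffun i => x i - (((i == j) && b) : nat)%:Z].
Definition L0 (j j' : 'I_d) : {set 'I_d} := [set i | (i != j) && (i != j')].
Definition w0 (j : 'I_d) (s : bool) : {ffun 'I_d -> option bool} :=
  [ffun i => if i == j then Some s else None].

Lemma L0C j j' : L0 j j' = L0 j' j.
Proof. by apply/setP => i; rewrite !inE andbC. Qed.

Lemma kcell_perp (a : cell d) : (0 < d)%N -> is_kcell d.-1 a ->
  exists j, perp a = Some j /\ a.2 = [set~ j].
Proof.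
move=> d0 /eqP ha; rewrite /perp; case: pickP => [j /= hj|hn].
  exists j; split => //; apply/eqP; rewrite eqEcard cardsC1 card_ord ha leqnn andbT.
  by apply/subsetP => i hi; rewrite !inE; apply: contraNneq hj => <-.
exfalso; have : a.2 = setT.
  by apply/setP => i; rewrite inE; have := hn i => /= /negbFE.
move=> e; move: ha; rewrite e cardsE card_ord; lia.
Qed.

Lemma shift_inj x y j b : (shift x j b == shift y j b) = (x == y).
Proof.
apply/eqP/eqP => [/ffunP h|->//]; apply/ffunP => i; have := h i; rewrite !ffunE.
by move/addIr.
Qed.

Lemma subcell_w0 x j s :
  subcell (dcell x) (w0 j s) = ([ffun i => x i + (((i == j) && s) : nat)%:Z], [set~ j]).
Proof.
rewrite /subcell /=; congr pair.
  apply/ffunP => i; rewrite !ffunE in_setT /=; by case: (i == j); case: s.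
apply/setP => i; rewrite !inE ffunE; by case: (i == j).
Qed.

Lemma sub_eq (a : cell d) x j s : a.2 = [set~ j] ->
  (subcell (dcell x) (w0 j s) == a) = (shift a.1 j s == x).
Proof.
move=> ha; rewrite subcell_w0; case: a ha => a1 a2 /= ->.
rewrite xpair_eqE eqxx andbT; apply/eqP/eqP => [<-|<-]; apply/ffunP => i; rewrite !ffunE.
  by rewrite addrK.
by rewrite subrK.
Qed.

Lemma sub_none (a : cell d) x w j : a.2 = [set~ j] -> subcell (dcell x) w == a ->
  forall i, (w i == None) = (i != j).
Proof.
move=> ha /eqP e i; have := congr1 snd e; rewrite ha /= => /setP /(_ i).
by rewrite !inE.
Qed.

Lemma term_unique (a b : cell d) (j j' : 'I_d) (x : point d) (L : {set 'I_d}) (w w' : {ffun 'I_d -> option bool}) : (2 <= d)%N ->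
  a.2 = [set~ j] -> b.2 = [set~ j'] ->
  #|L| == d.-2 -> valid_pair (dcell x) L w w' ->
  subcell (dcell x) w == a -> subcell (dcell x) w' == b ->
  [/\ j != j', L = L0 j j', w = w0 j (sigma L j) & w' = w0 j' (~~ sigma L j')].
Proof.
move=> d2 ha hb hL /forallP V sa sb.
have nw := sub_none ha sa; have nw' := sub_none hb sb.
have eL : L = L0 j j'.
  apply/setP => i; rewrite !inE; have := V i; rewrite /= in_setT.
  case: (i \in L).
    by case/andP; rewrite nw nw' => -> ->.
  case/orP => /andP [/eqP e1 /eqP e2].
    by have := nw i; rewrite e1 /= => /esym/negbFE ->.
  by have := nw' i; rewrite e2 /= => /esym/negbFE ->; rewrite andbF.
have njj : j != j'.
  apply/eqP => ejj; move: hL; rewrite eL ejj.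
  have -> : L0 j' j' = [set~ j'] by apply/setP => i; rewrite !inE andbb.
  rewrite cardsC1 card_ord; lia.
have jL : j \notin L by rewrite eL !inE eqxx.
have j'L : j' \notin L by rewrite eL !inE eqxx andbF.
split => //; apply/ffunP => i; rewrite ffunE; case: eqP => [->|/eqP ne].
- have := V j; rewrite in_setT (negbTE jL) nw nw' eqxx (negbTE njj) /=.
  by rewrite andbT orbF => /eqP.
- by apply/eqP; rewrite nw.
- have := V j'; rewrite in_setT (negbTE j'L) nw nw' eqxx (eq_sym j') (negbTE njj) andbF /=.
  by move/eqP.
- by apply/eqP; rewrite nw'.
Qed.

Lemma big_addb_false (I : finType) (P : pred I) (F : I -> bool) :
  (forall i, P i -> F i = false) -> \big[addb/false]_(i | P i) F i = false.
Proof. by move=> h; rewrite big1. Qed.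

Lemma cup_formula (a b : cell d) j j' x : (2 <= d)%N ->
  a.2 = [set~ j] -> b.2 = [set~ j'] ->
  cup d.-2 (ind a) (ind b) (dcell x) =
  (j != j') && (shift a.1 j (sigma (L0 j j') j) == x)
            && (shift b.1 j' (~~ sigma (L0 j j') j') == x).
Proof.
move=> d2 ha hb; rewrite /cup /ind /=.
have T (L : {set 'I_d}) (w w' : {ffun 'I_d -> option bool}) : (L \subset [set: 'I_d]) && (#|L| == d.-2) -> valid_pair (dcell x) L w w' ->
   (subcell (dcell x) w == a) && (subcell (dcell x) w' == b) ->
   [/\ j != j', L = L0 j j', w = w0 j (sigma L j) & w' = w0 j' (~~ sigma L j')].
  by move=> /andP[_ hL] V /andP[sa sb]; apply: term_unique V sa sb.
case: (eqVneq j j') => [ejj|njj] /=.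
  apply: big_addb_false => L PL; apply: big_addb_false => w _.
  apply: big_addb_false => w' V; apply/negbTE/negP => /(T _ _ _ PL V) [].
  by rewrite ejj eqxx.
have hc : #|L0 j j'| == d.-2.
  have -> : L0 j j' = [set~ j] :\ j' by apply/setP => i; rewrite !inE andbC.
  move: (cardsD1 j' [set~ j]); rewrite cardsC1 card_ord !inE eq_sym njj /=; lia.
have PL : (L0 j j' \subset [set: 'I_d]) && (#|L0 j j'| == d.-2) by rewrite subsetT hc.
rewrite (@big_addb1 _ _ _ (L0 j j')); last first.
  move=> L PL' nL; apply: big_addb_false => w _; apply: big_addb_false => w' V.
  apply/negbTE/negP => /(T _ _ _ PL' V) [_ eL _ _]; by rewrite eL eqxx in nL.
rewrite PL /=.
set s1 := sigma (L0 j j') j; set s2 := ~~ sigma (L0 j j') j'.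
rewrite (@big_addb1 _ _ _ (w0 j s1)); last first.
  move=> w _ nw; apply: big_addb_false => w' V; apply/negbTE/negP.
  by move=> /(T _ _ _ PL V) [_ _ ew _]; rewrite ew eqxx in nw.
rewrite (@big_addb1 _ _ _ (w0 j' s2)); last first.
  move=> w' V nw; apply/negbTE/negP.
  by move=> /(T _ _ _ PL V) [_ _ _ ew]; rewrite ew eqxx in nw.
have -> : valid_pair (dcell x) (L0 j j') (w0 j s1) (w0 j' s2).
  apply/forallP => i; rewrite /= in_setT !inE !ffunE.
  case: (eqVneq i j) => [->|nij]; first by rewrite eqxx /= (negbTE njj) eqxx.
  case: (eqVneq i j') => [->|nij'] //=; by rewrite eqxx /s2 negbK eqxx orbT.
by rewrite /= (sub_eq _ _ ha) (sub_eq _ _ hb).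
Qed.
End Geo.

Section Sig.
Variable d : nat.

Lemma card_lt (n : nat) : (n <= d)%N -> #|[set k : 'I_d | (k < n)%N]| = n.
Proof.
move=> hn.
have -> : [set k : 'I_d | (k < n)%N] = [set widen_ord hn i | i : 'I_n].
  apply/setP => k; rewrite inE; apply/idP/imsetP => [kn|[i _ ->]]; last first.
    exact: (ltn_ord i).
  by exists (Ordinal kn) => //; apply: val_inj.
rewrite card_imset ?card_ord // => i i' /(congr1 val) /= h; exact: val_inj.
Qed.

Lemma card_lt_D1 n (y : 'I_d) : (n <= d)%N -> (y < n)%N ->
  #|[set k : 'I_d | (k < n)%N] :\ y| = (n - 1)%N.
Proof.
move=> hn hy; have := cardsD1 y [set k : 'I_d | (k < n)%N].
rewrite card_lt // inE hy /=; lia.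
Qed.

Lemma sigma_count (j j' : 'I_d) : j != j' ->
  #|[set k in L0 j j' | (k < j)%N]| = (j - (j' < j))%N.
Proof.
move=> njj; case: (ltnP j' j) => hj.
  have -> : [set k in L0 j j' | (k < j)%N] = [set k : 'I_d | (k < j)%N] :\ j'.
    apply/setP => k; rewrite !inE.
    case: (ltnP k j) => hk; last by rewrite !andbF.
    have -> : (k != j) by rewrite -val_eqE /= neq_ltn hk.
    by [].
  rewrite card_lt_D1 ?hj //; exact: ltnW (ltn_ord j).
have -> : [set k in L0 j j' | (k < j)%N] = [set k : 'I_d | (k < j)%N].
  apply/setP => k; rewrite !inE.
  case: (ltnP k j) => hk; last by rewrite andbF.
  have -> : (k != j) by rewrite -val_eqE /= neq_ltn hk.
  have -> : (k != j') by rewrite -val_eqE /= neq_ltn (leq_trans hk hj).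
  by [].
rewrite card_lt ?subn0 //; exact: ltnW (ltn_ord j).
Qed.

Lemma sigma_par (j j' : 'I_d) : j != j' ->
  sigma (L0 j j') j (+) sigma (L0 j j') j' = ~~ (odd j (+) odd j').
Proof.
move=> njj; rewrite /sigma sigma_count // L0C sigma_count 1?eq_sym //.
have : j != j' :> nat by [].
case: (ltngtP j j') => // h _ /=.
  rewrite subn0; case: (nat_of_ord j') h => [//|m] h; rewrite subSS subn0 /=.
  by case: (odd j); case: (odd m).
rewrite subn0; case: (nat_of_ord j) h => [//|m] h; rewrite subSS subn0 /=.
by case: (odd j'); case: (odd m).
Qed.

Lemma integral_cup (a b : cell d) j j' : (2 <= d)%N ->
  a.2 = [set~ j] -> b.2 = [set~ j'] ->
  integral (cup d.-2 (ind a) (ind b)) =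
  (j != j') && (shift b.1 j' (~~ sigma (L0 j j') j') == shift a.1 j (sigma (L0 j j') j)).
Proof.
move=> d2 ha hb.
rewrite (@integral_eq _ _ [:: shift a.1 j (sigma (L0 j j') j)]) // ?big_seq1.
  by rewrite (@cup_formula d a b j j') // eqxx andbT.
by move=> y; rewrite (@cup_formula d a b j j') // => /andP[/andP[_ /eqP <-] _]; rewrite mem_seq1.
Qed.

Lemma cup_supp (a b : cell d) j j' x : (2 <= d)%N ->
  a.2 = [set~ j] -> b.2 = [set~ j'] ->
  cup d.-2 (ind a) (ind b) (dcell x) -> x \in [:: shift a.1 j (sigma (L0 j j') j)].
Proof.
by move=> d2 ha hb; rewrite (@cup_formula d a b j j') // => /andP[/andP[_ /eqP <-] _]; rewrite mem_seq1.
Qed.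
End Sig.

Section Ferm.
Variable d : nat.

Lemma LR_eq (a : cell d) (j : 'I_d) : perp a = Some j ->
  LR a = (dcell (shift a.1 j (odd (j.+1 + d))), dcell (shift a.1 j (~~ odd (j.+1 + d)))).
Proof.
move=> hp; rewrite /LR hp.
have hm : minus_cell a j = dcell (shift a.1 j true).
  by congr dcell; apply/ffunP => i; rewrite !ffunE andbT.
have hpl : plus_cell a = dcell (shift a.1 j false).
  by rewrite /plus_cell; congr dcell; apply/ffunP => i; rewrite !ffunE andbF subr0.
by case: (odd _); rewrite hm hpl.
Qed.

Lemma boolfact (P : bool -> bool -> bool) la lb s t : la (+) lb = ~~ (s (+) t) ->
  (~~ P la lb) (+) (~~ P (~~ la) (~~ lb)) = P s (~~ t) (+) P (~~ s) t.
Proof.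
by case: la; case: lb; case: s; case: t => //= _; case: (P _ _); case: (P _ _).
Qed.

Lemma ferm_sign (a b : cell d) (j j' : 'I_d) : (2 <= d)%N ->
  a.2 = [set~ j] -> b.2 = [set~ j'] ->
  (shift a.1 j (odd (j.+1 + d)) != shift b.1 j' (odd (j'.+1 + d))) (+)
  (shift a.1 j (~~ odd (j.+1 + d)) != shift b.1 j' (~~ odd (j'.+1 + d))) =
  integral (cup d.-2 (ind a) (ind b)) (+) integral (cup d.-2 (ind b) (ind a)).
Proof.
move=> d2 ha hb; rewrite (integral_cup d2 ha hb) (integral_cup d2 hb ha).
case: (eqVneq j j') => [<-|njj] /=.
  by rewrite !shift_inj addbb.
rewrite [L0 j' j]L0C [X in _ = X (+) _]eq_sym.
apply: (boolfact (fun s t => shift a.1 j s == shift b.1 j' t)).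
rewrite (sigma_par njj) !oddD.
by case: (odd j); case: (odd j'); case: (odd d).
Qed.

Lemma swap4 (R : algType algC) (a b c e : R) (k1 k2 k3 k4 : algC) :
  a * c = k1 *: (c * a) -> a * e = k2 *: (e * a) ->
  b * c = k3 *: (c * b) -> b * e = k4 *: (e * b) ->
  a * b * (c * e) = (k1 * k2 * k3 * k4) *: (c * e * (a * b)).
Proof.
move=> h1 h2 h3 h4.
rewrite -mulrA (mulrA b) h3 -scalerAl -scalerAr.
rewrite (mulrA a) (mulrA a) h1 -!scalerAl.
rewrite -(mulrA (c * a)) h4 -scalerAr (mulrA (c * a)) -(mulrA c a e) h2 -scalerAr -!scalerAl.
rewrite !scalerA !mulrA; congr (_ *: _).
by rewrite [k3 * k1]mulrC -!mulrA [k4 * k2]mulrC [k3 * (k2 * k4)]mulrCA.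
Qed.

End Ferm.

Section Bos.
Variables (d : nat) (B : nzRingType) (X Z : cell d -> B).
Hypothesis XZ : forall c, is_kcell d.-1 c -> X c * Z c = - (Z c * X c).
Hypothesis ZZ : forall c c', is_kcell d.-1 c -> is_kcell d.-1 c' -> c != c' ->
     Z c * Z c' = Z c' * Z c.
Hypothesis XZ' : forall c c', is_kcell d.-1 c -> is_kcell d.-1 c' -> c != c' ->
     X c * Z c' = Z c' * X c.

Definition Fz (f : cell d -> bool) (y : cell d) : B := if f y then Z y else 1.

Lemma X_prod y (s : seq (cell d)) f : is_kcell d.-1 y -> all (is_kcell d.-1) s -> uniq s ->
  X y * \prod_(c <- s) Fz f c =
  if (y \in s) && f y then - (\prod_(c <- s) Fz f c * X y) else \prod_(c <- s) Fz f c * X y.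
Proof.
move=> hy; elim: s => [|c0 s IH] /=; first by rewrite big_nil mulr1 mul1r.
move=> /andP[hc0 hs] /andP[nc0 us]; rewrite big_cons in_cons.
case: (eqVneq y c0) => [ey|ne].
  subst c0.
  move: (IH hs us); rewrite (negbTE nc0) /= => IH'.
  rewrite /Fz in IH' *; case: (f y).
    by rewrite mulrA XZ // mulNr -[Z y * X y * _]mulrA IH' !mulrA.
  by rewrite mul1r IH'.
have hx : X y * Fz f c0 = Fz f c0 * X y.
  by rewrite /Fz; case: (f c0); rewrite ?mulr1 ?mul1r // XZ'.
rewrite orFb mulrA hx -mulrA (IH hs us).
by case: ifP => _; rewrite ?mulrN mulrA.
Qed.

Lemma prod_comm (s s' : seq (cell d)) f f' : all (is_kcell d.-1) s -> all (is_kcell d.-1) s' ->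
  \prod_(c <- s) Fz f c * \prod_(c <- s') Fz f' c = \prod_(c <- s') Fz f' c * \prod_(c <- s) Fz f c.
Proof.
move=> /allP hs /allP hs'.
rewrite (big_seq _ _ s') ; apply: commr_prod => y ys'.
apply: commr_sym; rewrite big_seq; apply: commr_prod => x xs.
rewrite /GRing.comm /Fz; case: (f' y); case: (f x); rewrite ?mulr1 ?mul1r //.
case: (eqVneq y x) => [->//|ne]; apply: ZZ => //; [exact: hs' | exact: hs].
Qed.
End Bos.

Lemma U_decomp d (B : nzRingType) (X Z : cell d -> B) (c : cell d) :
  (2 <= d)%N -> is_kcell d.-1 c ->
  exists s : seq (cell d), [/\ uniq s, all (is_kcell d.-1) s,
    (forall y, is_kcell d.-1 y -> integral (cup d.-2 (ind y) (ind c)) -> y \in s) &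
    U_op X Z c = X c * \prod_(y <- s) Fz Z (fun y => integral (cup d.-2 (ind y) (ind c))) y].
Proof.
move=> d2 hc; rewrite /U_op.
set e := fun c' => integral (cup d.-2 (ind c') (ind c)).
set N := epsilon _ _.
have hN : forall c' : cell d, is_kcell d.-1 c' -> ~~ in_box N c'.1 -> e c' = false.
  apply: (@epsilon_spec nat (inhabits 0%N) (fun N => forall c' : cell d, is_kcell d.-1 c' ->
                         ~~ in_box N c'.1 -> e c' = false)).
  have [j [_ hj]] := kcell_perp (ltnW d2) hc.
  exists (\max_i `|c.1 i|%N).+1 => c' hc' nb; apply/negbTE; apply: contra nb.
  have [j' [_ hj']] := kcell_perp (ltnW d2) hc'.
  rewrite /e (integral_cup d2 hj' hj) => /andP[_ /eqP /ffunP h].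
  apply/forallP => i; have := h i; rewrite !ffunE => hi.
  have h2 := @leq_bigmax _ (fun i => `|c.1 i|%N) i.
  move: h2 hi; set m := (\max_i _)%N => h2 hi.
  move: hi; case: (_ && _); case: (_ && _) => /= hi; lia.
exists (box_cells d N d.-1); split.
- apply: allpairs_uniq; [exact: box_pts_uniq | exact: enum_uniq |].
  by move=> [x D] [x' D'] _ _.
- apply/allP => y /allpairsP [[x D] [_ hD ->]]; by rewrite mem_enum inE in hD.
- move=> y hy ey; apply/allpairsP; exists (y.1, y.2); split.
  + apply: in_box_mem; apply: contraT => /(hN _ hy); by rewrite /e ey.
  + by rewrite mem_enum inE.
  + by case: y {hy ey}.
- by [].
Qed.

Lemma comm_sign (B : nzRingType) (a b p q : B) (s1 s2 : bool) :
  a * b = b * a -> p * q = q * p ->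
  p * b = (if s1 then - (b * p) else b * p) ->
  q * a = (if s2 then - (a * q) else a * q) ->
  a * p * (b * q) = b * q * (a * p) * (-1) ^+ (s2 (+) s1).
Proof.
move=> hab hpq h1 h2.
have L : a * p * (b * q) = (a * (p * b)) * q by rewrite !mulrA.
have R : b * q * (a * p) = (b * (q * a)) * p by rewrite !mulrA.
rewrite L R h1 h2 {L R h1 h2}.
case: s1; case: s2 => /=; rewrite ?expr0 ?expr1 ?mulr1 ?mulrN1 ?mulrN ?mulNr ?opprK !mulrA hab;
  by rewrite -!mulrA hpq.
Qed.

Theorem lemma1 (d : nat) (hd : (2 <= d)%N)
  (* fermionic algebra: a complex *-algebra with Majoranas on d-cells *)
  (R : algType algC) (star : R -> R)
  (star_invol : forall x, star (star x) = x)
  (star_add : forall x y, star (x + y) = star x + star y)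
  (star_mul : forall x y, star (x * y) = star y * star x)
  (star_scale : forall (a : algC) x, star (a *: x) = a^* *: star x)
  (gamma gamma' : cell d -> R)
  (herm : forall x, star (gamma (dcell x)) = gamma (dcell x))
  (herm' : forall x, star (gamma' (dcell x)) = gamma' (dcell x))
  (sq : forall x, gamma (dcell x) * gamma (dcell x) = 1)
  (sq' : forall x, gamma' (dcell x) * gamma' (dcell x) = 1)
  (anti : forall x y, x != y ->
     gamma (dcell x) * gamma (dcell y) = - (gamma (dcell y) * gamma (dcell x)))
  (anti' : forall x y, x != y ->
     gamma' (dcell x) * gamma' (dcell y) = - (gamma' (dcell y) * gamma' (dcell x)))
  (anti_mix : forall x y,
     gamma (dcell x) * gamma' (dcell y) = - (gamma' (dcell y) * gamma (dcell x)))
  (* bosonic algebra: Pauli operators on (d-1)-cells *)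
  (B : nzRingType) (X Z : cell d -> B)
  (X2 : forall c, is_kcell d.-1 c -> X c * X c = 1)
  (Z2 : forall c, is_kcell d.-1 c -> Z c * Z c = 1)
  (XZ : forall c, is_kcell d.-1 c -> X c * Z c = - (Z c * X c))
  (XX : forall c c', is_kcell d.-1 c -> is_kcell d.-1 c' -> c != c' ->
     X c * X c' = X c' * X c)
  (ZZ : forall c c', is_kcell d.-1 c -> is_kcell d.-1 c' -> c != c' ->
     Z c * Z c' = Z c' * Z c)
  (XZ' : forall c c', is_kcell d.-1 c -> is_kcell d.-1 c' -> c != c' ->
     X c * Z c' = Z c' * X c)
  (c c' : cell d) (hc : is_kcell d.-1 c) (hc' : is_kcell d.-1 c') :
  let e := integral (fun C => cup d.-2 (ind c) (ind c') C
                              (+) cup d.-2 (ind c') (ind c) C) in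
  S_op gamma gamma' c * S_op gamma gamma' c'
    = S_op gamma gamma' c' * S_op gamma gamma' c * (-1) ^+ e
  /\ U_op X Z c * U_op X Z c' = U_op X Z c' * U_op X Z c * (-1) ^+ e.
Proof.
move=> e.
have [j [pj hj]] := kcell_perp (ltnW hd) hc.
have [j' [pj' hj']] := kcell_perp (ltnW hd) hc'.
have he : e = integral (cup d.-2 (ind c) (ind c')) (+) integral (cup d.-2 (ind c') (ind c)).
  rewrite /e; apply: integral_xor.
    by move=> x; apply: (cup_supp hd hj hj').
  by move=> x; apply: (cup_supp hd hj' hj).
split.
  rewrite /S_op (LR_eq pj) (LR_eq pj') /=.
  set p := shift c.1 j _; set q := shift c.1 j _.
  set r := shift c'.1 j' _; set s := shift c'.1 j' _.
  have hsign : e = (p != r) (+) (q != s) by rewrite he -(ferm_sign hd hj hj').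
  rewrite -!scalerAl -!scalerAr !scalerA.
  have h1 : gamma (dcell p) * gamma (dcell r) =
     (if p != r then -1 else 1) *: (gamma (dcell r) * gamma (dcell p)).
    by case: (eqVneq p r) => [->|ne] /=; rewrite ?scale1r // anti // scaleN1r.
  have h2 : gamma (dcell p) * gamma' (dcell s) = -1 *: (gamma' (dcell s) * gamma (dcell p)).
    by rewrite anti_mix scaleN1r.
  have h3 : gamma' (dcell q) * gamma (dcell r) = -1 *: (gamma (dcell r) * gamma' (dcell q)).
    by rewrite scaleN1r anti_mix opprK.
  have h4 : gamma' (dcell q) * gamma' (dcell s) =
     (if q != s then -1 else 1) *: (gamma' (dcell s) * gamma' (dcell q)).
    by case: (eqVneq q s) => [->|ne] /=; rewrite ?scale1r // anti' // scaleN1r.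
  rewrite (swap4 h1 h2 h3 h4) hsign scalerA.
  case: (p != r); case: (q != s) => /=;
    rewrite ?expr0 ?expr1 ?mulr1 ?mulrN1 ?mulN1r ?mulrN ?mulNr ?opprK ?scaleNr ?scalerN;
    by rewrite ?scalerA ?mulr1.
have [sl [us ks hs ->]] := U_decomp X Z hd hc.
have [sl' [us' ks' hs' ->]] := U_decomp X Z hd hc'.
rewrite he.
apply: comm_sign.
- by case: (eqVneq c c') => [->|ne] //; apply: XX.
- exact: prod_comm.
- have E := @X_prod d B X Z XZ XZ' c' sl (fun y => integral (cup d.-2 (ind y) (ind c))) hc' ks us.
  rewrite /= in E.
  case fc: (integral (cup d.-2 (ind c') (ind c))) in E *.
    by rewrite (hs _ hc' fc) /= in E; rewrite E opprK.
  by rewrite andbF in E; rewrite E.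
- have E := @X_prod d B X Z XZ XZ' c sl' (fun y => integral (cup d.-2 (ind y) (ind c'))) hc ks' us'.
  rewrite /= in E.
  case fc: (integral (cup d.-2 (ind c) (ind c'))) in E *.
    by rewrite (hs' _ hc fc) /= in E; rewrite E opprK.
  by rewrite andbF in E; rewrite E.
Qed.
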